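(* Let $K$ be a field, $\nu$ a valuation on $K[x]$, and $\mathbf{Q}\subseteq K[x]$ a set of key polynomials for $\nu$. Then $\mathbf{Q}$ is a complete set for $\nu$ if and only if $\mathbf{Q}$ satisfies (GS1$^*$).
   Context: $\nu:K[x]\to\Gamma\cup\{\infty\}$ is a valuation ($\Gamma$ an ordered abelian group) with $\nu(f)=\infty$ only for $f=0$; $\Gamma'=\Gamma\otimes\mathbb{Q}$. For $k\in\mathbb{N}$, $\partial_k f=\frac{1}{k!}\frac{d^kf}{dx^k}$ (Hasse derivative). For nonconstant $f$, $\epsilon(f)=\max\{(\nu(f)-\nu(\partial_kf))/k\mid 1\le k\le\deg f\}\in\Gamma'$ (terms with $\partial_kf=0$ omitted). A key polynomial is a monic nonconstant $Q\in K[x]$ such that every nonconstant $f\in K[x]$ with $\epsilon(f)\ge\epsilon(Q)$ satisfies $\deg f\ge\deg Q$. For monic nonconstant $Q$, the $Q$-expansion of $f$ is the unique expression $f=f_0+f_1Q+\dots+f_nQ^n$ with each $f_i=0$ or $\deg f_i<\deg Q$, and $\nu_Q(f)=\min_i\nu(f_iQ^i)$. A set $\mathbf{Q}$ of monic nonconstant polynomials is complete for $\nu$ if for every nonconstant $f\in K[x]$ there is $Q\in\mathbf{Q}$ with $\deg Q\le\deg f$ and $\nu_Q(f)=\nu(f)$. For finitely supported $\lambda:\mathbf{Q}\to\mathbb{N}_0$ let $\mathbf{Q}^\lambda=\prod_{\lambda(Q)\neq0}Q^{\lambda(Q)}$. (GS1$^*$): for every $f\in K[x]$ there exist $r\ge0$,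 $a_1,\dots,a_r\in K$ and finitely supported $\lambda_1,\dots,\lambda_r:\mathbf{Q}\to\mathbb{N}_0$ with $f=\sum_{i=1}^ra_i\mathbf{Q}^{\lambda_i}$, $\nu(a_i\mathbf{Q}^{\lambda_i})\ge\nu(f)$ for all $i$, and $\deg Q\le\deg f$ whenever $\lambda_i(Q)\ne0$ for some $i$. *)

(* Defs.v *)
From mathcomp Require Import all_boot all_order all_algebra.
Set Implicit Arguments. Unset Strict Implicit. Unset Printing Implicit Defensive.
Import GRing.Theory.
Local Open Scope ring_scope.

(* Gamma : an abelian group (zmodType) with an order relation [le] making it an
   ordered abelian group.  Gamma u {oo} is modelled by [option Gamma], None = oo. *)
Section Defs.
Variable G : zmodType.
Variable le : rel G.

Definition ordered_abelian_group : Prop :=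
  [/\ reflexive le, antisymmetric le, transitive le, total le &
      forall a b c : G, le a b -> le (a + c) (b + c)].

Definition ole (x y : option G) : bool :=
  match x, y with
  | _, None => true
  | None, Some _ => false
  | Some a, Some b => le a b
  end.

Definition oadd (x y : option G) : option G :=
  match x, y with
  | Some a, Some b => Some (a + b)
  | _, _ => None
  end.

Definition omin (x y : option G) : option G := if ole x y then x else y.

Variable K : fieldType.

Definition valuation (nu : {poly K} -> option G) : Prop :=
  [/\ forall f, nu f = None <-> f = 0,
      forall f g, nu (f * g) = oadd (nu f) (nu g) &
      forall f g, ole (omin (nu f) (nu g)) (nu (f + g))].

(* Gamma' = Gamma (x) Q : the element a (x) (1/k), k > 0, is represented by
   the pair (a, k); (a,k) <= (b,j) iff j*a <= k*b in Gamma. *)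
Definition qle (x y : G * nat) : bool := le (x.1 *+ y.2) (y.1 *+ x.2).
Definition qmax (x y : G * nat) : G * nat := if qle x y then y else x.

Variable nu : {poly K} -> option G.

Definition gval (f : {poly K}) : G := odflt 0 (nu f).

Definition deg (f : {poly K}) : nat := (size f).-1.

(* the list of (nu f - nu (d_k f)) / k, 1 <= k <= deg f, d_k f <> 0,
   where d_k = p^`N(k) is the Hasse derivative *)
Definition eps_terms (f : {poly K}) : seq (G * nat) :=
  [seq (gval f - gval (f^`N(k)), k) | k <- iota 1 (deg f) & f^`N(k) != 0].

Definition eps (f : {poly K}) : G * nat :=
  match eps_terms f with
  | [::] => (0, 1%N)
  | t :: ts => foldr qmax t ts
  end.

Definition nonconstant (f : {poly K}) : bool := (1 < size f)%N.

Definition key_polynomial (Q : {poly K}) : Prop :=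
  [/\ Q \is monic, nonconstant Q &
      forall f, nonconstant f -> qle (eps Q) (eps f) -> (deg Q <= deg f)%N].

(* i-th coefficient f_i of the Q-expansion f = sum_i f_i Q^i, deg f_i < deg Q *)
Definition qexp_coef (Q f : {poly K}) (i : nat) : {poly K} := (f %/ Q ^+ i) %% Q.

(* nu_Q(f) = min_i nu(f_i Q^i) (f_i = 0 for i >= size f) *)
Definition nuQ (Q f : {poly K}) : option G :=
  \big[omin/None]_(i < size f) nu (qexp_coef Q f i * Q ^+ i).

Definition complete_set (QS : {poly K} -> Prop) : Prop :=
  forall f, nonconstant f ->
    exists Q, [/\ QS Q, (deg Q <= deg f)%N & nuQ Q f = nu f].

(* GS1-star : a finitely supported lambda : QS -> N_0 is encoded by a finite
   multiset (seq) of elements of QS, Q^lambda being the product of its members. *)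
Definition GS1star (QS : {poly K} -> Prop) : Prop :=
  forall f : {poly K},
    exists ts : seq (K * seq {poly K}),
      [/\ f = \sum_(t <- ts) t.1%:P * \prod_(q <- t.2) q,
          forall t, t \in ts -> ole (nu f) (nu (t.1%:P * \prod_(q <- t.2) q)) &
          forall t q, t \in ts -> q \in t.2 -> QS q /\ (deg q <= deg f)%N].

End Defs.

(* Main.v *)
Require Import Defs.
From mathcomp Require Import all_boot all_order all_algebra.
From mathcomp Require Import ring zify.
Set Implicit Arguments. Unset Strict Implicit. Unset Printing Implicit Defensive.
Import GRing.Theory.
Local Open Scope ring_scope.

Section OG.
Variable G : zmodType.
Variable le : rel G.
Hypothesis Hle : ordered_abelian_group le.

Definition lt (a b : G) := ~~ le b a.

Lemma leR a : le a a. Proof. by case: Hle. Qed.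
Lemma leT a b c : le a b -> le b c -> le a c.
Proof. by case: Hle => _ _ T _ _; apply: T. Qed.
Lemma leA a b : le a b -> le b a -> a = b.
Proof. by case: Hle => _ A _ _ _ h1 h2; apply: A; rewrite h1 h2. Qed.
Lemma leTot a b : le a b || le b a.
Proof. by case: Hle => _ _ _ T _; apply: T. Qed.
Lemma leDr a b c : le a b -> le (a + c) (b + c).
Proof. by case: Hle => _ _ _ _ D; apply: D. Qed.
Lemma leD2r a b c : le (a + c) (b + c) = le a b.
Proof.
apply/idP/idP => [h|]; last exact: leDr.
by have := leDr (- c) h; rewrite !addrK.
Qed.
Lemma leD2l a b c : le (c + a) (c + b) = le a b.
Proof. by rewrite ![c + _]addrC leD2r. Qed.
Lemma leD a b c e : le a b -> le c e -> le (a + c) (b + e).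
Proof.
move=> h1 h2; apply: (leT (leDr c h1)); by rewrite leD2l.
Qed.
Lemma ltW a b : lt a b -> le a b.
Proof. by rewrite /lt; case/orP: (leTot a b) => ->. Qed.
Lemma lt_le_trans a b c : lt a b -> le b c -> lt a c.
Proof. move=> h1 h2; apply/negP => h3; by move/negP: h1; apply; apply: leT h2 h3. Qed.
Lemma le_lt_trans a b c : le a b -> lt b c -> lt a c.
Proof. move=> h1 h2; apply/negP => h3; by move/negP: h2; apply; apply: leT h3 h1. Qed.
Lemma ltD a b c e : lt a b -> le c e -> lt (a + c) (b + e).
Proof.
move=> h1 h2; apply/negP => h3.
have : le (b + c) (a + c) by apply: leT h3; rewrite leD2l.
by rewrite leD2r; apply/negP.
Qed.
Lemma ltD2r a b c : lt (a + c) (b + c) = lt a b.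
Proof. by rewrite /lt leD2r. Qed.
Lemma leMn a b n : le a b -> le (a *+ n) (b *+ n).
Proof. move=> h; elim: n => [|n IH]; first by rewrite !mulr0n leR. by rewrite !mulrS leD. Qed.
Lemma ltMn a b n : (0 < n)%N -> lt a b -> lt (a *+ n) (b *+ n).
Proof.
case: n => // n _ h; rewrite !mulrS; apply: ltD => //; apply: leMn; exact: ltW.
Qed.
Lemma leMn2 a b n : (0 < n)%N -> le (a *+ n) (b *+ n) = le a b.
Proof.
move=> n0; apply/idP/idP; last exact: leMn.
move=> h; apply/negPn/negP => h2.
by move/negP: (ltMn n0 h2); apply.
Qed.
Lemma ltMn2 a b n : (0 < n)%N -> lt (a *+ n) (b *+ n) = lt a b.
Proof. by move=> n0; rewrite /lt leMn2. Qed.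
Lemma torsion (a : G) : a + a = 0 -> a = 0.
Proof.
move=> h; case/orP: (leTot a 0) => h1.
- apply: leA => //; have : le (a + a) (a + 0) by rewrite leD2l.
  by rewrite h addr0.
- apply: leA => //; have : le (a + 0) (a + a) by rewrite leD2l.
  by rewrite h addr0.
Qed.

Implicit Types x y z : option G.
Definition olt (x y : option G) := ~~ ole le y x.
Lemma oleR x : ole le x x. Proof. by case: x => //= a; apply: leR. Qed.
Lemma oleT x y z : ole le x y -> ole le y z -> ole le x z.
Proof. by case: x; case: y; case: z => //= a b c; apply: leT. Qed.
Lemma oleA x y : ole le x y -> ole le y x -> x = y.
Proof. by case: x; case: y => //= a b h1 h2; rewrite (leA h2 h1). Qed.
Lemma oleTot x y : ole le x y || ole le y x.
Proof. by case: x; case: y => //= a b; apply: leTot. Qed.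
Lemma oltW x y : olt x y -> ole le x y.
Proof. by rewrite /olt; case/orP: (oleTot x y) => ->. Qed.
Lemma olt_le_trans (a b c : option G) : olt a b -> ole le b c -> olt a c.
Proof. move=> h1 h2; apply/negP => h3; by move/negP: h1; apply; apply: oleT h2 h3. Qed.
Lemma ole_lt_trans (a b c : option G) : ole le a b -> olt b c -> olt a c.
Proof. move=> h1 h2; apply/negP => h3; by move/negP: h2; apply; apply: oleT h3 h1. Qed.
Lemma ole_None x : ole le x None. Proof. by case: x. Qed.
Lemma oleNone x : ole le None x -> x = None. Proof. by case: x. Qed.
Lemma oaddC x y : oadd x y = oadd y x.
Proof. by case: x; case: y => //= a b; rewrite addrC. Qed.
Lemma oaddA x y z : oadd x (oadd y z) = oadd (oadd x y) z.
Proof. by case: x; case: y; case: z => //= a b c; rewrite addrA. Qed.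
Lemma oaddx0 x : oadd x (Some 0) = x.
Proof. by case: x => //= a; rewrite addr0. Qed.
Lemma oadd_le (a b c e : option G) : ole le a b -> ole le c e -> ole le (oadd a c) (oadd b e).
Proof. by case: a; case: b; case: c; case: e => //= *; apply: leD. Qed.
Lemma oadd_lt (a c : G) (b e : option G) : olt (Some a) b -> ole le (Some c) e -> olt (Some (a + c)) (oadd b e).
Proof. by case: b; case: e => //= b e h1 h2; apply: ltD. Qed.
Lemma oadd2r x y (c : G) : ole le (oadd x (Some c)) (oadd y (Some c)) = ole le x y.
Proof. by case: x; case: y => //= a b; rewrite leD2r. Qed.
Lemma oaddlt2r x y (c : G) : olt (oadd x (Some c)) (oadd y (Some c)) = olt x y.
Proof. by rewrite /olt oadd2r. Qed.

Definition osc (d : nat) (x : option G) := omap (fun a => a *+ d) x.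
Lemma osc_le d x y : ole le x y -> ole le (osc d x) (osc d y).
Proof. by case: x; case: y => //= a b; apply: leMn. Qed.
Lemma osc_le2 d x y : (0 < d)%N -> ole le (osc d x) (osc d y) = ole le x y.
Proof. by move=> d0; case: x; case: y => //= a b; rewrite leMn2. Qed.
Lemma osc_lt2 d x y : (0 < d)%N -> olt (osc d x) (osc d y) = olt x y.
Proof. by move=> d0; rewrite /olt osc_le2. Qed.

Definition upc (P : option G -> Prop) := forall x y, ole le x y -> P x -> P y.
Lemma omin_P (P : option G -> Prop) x y : P x -> P y -> P (omin le x y).
Proof. by rewrite /omin; case: ifP. Qed.
Lemma omin_le x y : ole le (omin le x y) x /\ ole le (omin le x y) y.
Proof.
rewrite /omin; case: ifP => h; split => //; try apply: oleR.
by case/orP: (oleTot x y) => h2; [rewrite h2 in h|].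
Qed.
End OG.
Section Val.
Variable G : zmodType.
Variable le : rel G.
Hypothesis Hle : ordered_abelian_group le.
Variable K : fieldType.
Variable nu : {poly K} -> option G.
Hypothesis Hnu : valuation le nu.

Lemma nu0 : nu 0 = None. Proof. by case: Hnu => h _ _; apply/h. Qed.
Lemma nu_None f : nu f = None -> f = 0. Proof. by case: Hnu => h _ _; case: (h f). Qed.
Lemma nuNZ f : f != 0 -> nu f = Some (gval nu f).
Proof. rewrite /gval; case E: (nu f) => [a|] //=; by rewrite (nu_None E) eqxx. Qed.
Lemma nuM f g : nu (f * g) = oadd (nu f) (nu g). Proof. by case: Hnu. Qed.
Lemma nuD_upc (P : option G -> Prop) f g : upc le P -> P (nu f) -> P (nu g) -> P (nu (f + g)).
Proof.
move=> uP h1 h2; case: Hnu => _ _ U; apply: (uP _ _ (U f g)); exact: omin_P.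
Qed.
Lemma nu1 : nu 1 = Some 0.
Proof.
have := nuM 1 1; rewrite mulr1 (nuNZ (oner_neq0 _)) /= => [[h]].
by rewrite -{1}[gval nu 1]addr0 in h; move/addrI: h => <-.
Qed.
Lemma nuN1 : nu (-1) = Some 0.
Proof.
have := nuM (-1) (-1); rewrite mulrNN mulr1 nu1.
have n1 : (-1 : {poly K}) != 0 by rewrite oppr_eq0 oner_neq0.
rewrite (nuNZ n1) /= => [[h]].
by rewrite (torsion Hle (esym h)).
Qed.
Lemma nuN f : nu (- f) = nu f.
Proof. by rewrite -mulN1r nuM nuN1; case: (nu f) => //= a; rewrite add0r. Qed.
Lemma nuB_upc (P : option G -> Prop) f g : upc le P -> P (nu f) -> P (nu g) -> P (nu (f - g)).
Proof. by move=> uP h1 h2; apply: nuD_upc => //; rewrite nuN. Qed.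
Lemma nu_sum_upc (P : option G -> Prop) (I : Type) (s : seq I) (Pr : pred I) (F : I -> {poly K}) :
  upc le P -> P None -> (forall i, Pr i -> P (nu (F i))) -> P (nu (\sum_(i <- s | Pr i) F i)).
Proof.
move=> uP P0 h; apply: (big_ind (fun p => P (nu p))); first by rewrite nu0.
  by move=> x y; apply: nuD_upc.
exact: h.
Qed.
Lemma upc_ole (g : option G) : upc le (ole le g).
Proof. by move=> x y h1 h2; apply: oleT h2 h1. Qed.
Lemma upc_olt (g : option G) : upc le (olt le g).
Proof. by move=> x y h1 h2; apply: olt_le_trans h2 h1. Qed.
Lemma nu_strict f g : olt le (nu f) (nu g) -> nu (f + g) = nu f.
Proof.
move=> h; apply: (oleA Hle).
- apply/negPn/negP => h2.
  have : olt le (nu f) (nu ((f + g) - g)).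
    by apply: (nuB_upc (P := olt le (nu f))) => //; apply: upc_olt.
  by rewrite addrK /olt oleR.
- apply: (nuD_upc (P := ole le (nu f))); [exact: upc_ole| exact: oleR | exact: oltW].
Qed.
End Val.
Section Eps.
Variable G : zmodType.
Variable le : rel G.
Hypothesis Hle : ordered_abelian_group le.
Variable K : fieldType.
Variable nu : {poly K} -> option G.

Lemma qleR x : qle le x x. Proof. exact: (leR Hle). Qed.
Lemma qleTot x y : qle le x y || qle le y x. Proof. exact: (leTot Hle). Qed.
Lemma qleT x y z : (0 < y.2)%N -> qle le x y -> qle le y z -> qle le x z.
Proof.
case: x => a k; case: y => b j; case: z => c m /= j0; rewrite /qle /= => h1 h2.
have h1' := leMn Hle m h1; have h2' := leMn Hle k h2.
rewrite -(leMn2 Hle _ _ j0) mulrnAC [c *+ k *+ j]mulrnAC.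
apply: (leT Hle h1'); rewrite [b *+ k *+ m]mulrnAC; exact: h2'.
Qed.
Lemma qmax_l x y : qle le x (qmax le x y).
Proof. rewrite /qmax; case: ifP => // _; exact: qleR. Qed.
Lemma qmax_r x y : qle le y (qmax le x y).
Proof.
rewrite /qmax; case: ifP => h; first exact: qleR.
by case/orP: (qleTot x y) => h2; [rewrite h2 in h|].
Qed.
Lemma qmax_mem x y : (qmax le x y == x) || (qmax le x y == y).
Proof. by rewrite /qmax; case: ifP; rewrite eqxx ?orbT. Qed.
Lemma foldr_qmax_mem t0 ts : foldr (qmax le) t0 ts \in t0 :: ts.
Proof.
elim: ts => [|t ts IH] /=; first by rewrite inE eqxx.
case/orP: (qmax_mem t (foldr (qmax le) t0 ts)) => /eqP ->.
  by rewrite !inE eqxx orbT.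
by move: IH; rewrite !inE; case/orP => ->; rewrite ?orbT.
Qed.
Lemma foldr_qmax_ge t0 ts : (forall t, t \in t0 :: ts -> (0 < t.2)%N) ->
  forall t, t \in t0 :: ts -> qle le t (foldr (qmax le) t0 ts).
Proof.
elim: ts => [|s ts IH] /= hpos t.
  by rewrite inE => /eqP ->; exact: qleR.
have hpos' : forall t, t \in t0 :: ts -> (0 < t.2)%N.
  by move=> u hu; apply: hpos; move: hu; rewrite !inE; case/orP => ->; rewrite ?orbT.
have -> : (t \in [:: t0, s & ts]) = (t == s) || (t \in t0 :: ts).
  by rewrite !inE orbCA.
case/orP => [/eqP ->|ht]; first exact: qmax_l.
apply: (qleT (hpos' _ (foldr_qmax_mem t0 ts))); first exact: IH.
exact: qmax_r.
Qed.
End Eps.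
Section Eps2.
Variable G : zmodType.
Variable le : rel G.
Hypothesis Hle : ordered_abelian_group le.
Variable K : fieldType.
Variable nu : {poly K} -> option G.
Implicit Types f g h : {poly K}.

Lemma eps_termsP f t : t \in eps_terms nu f -> exists k, [/\ (0<k)%N, (k <= deg f)%N, f^`N(k) != 0 & t = (gval nu f - gval nu f^`N(k), k)].
Proof.
rewrite /eps_terms => /mapP [k]; rewrite mem_filter mem_iota => /andP [nz /andP [k1 k2]] ->.
exists k; split => //; by rewrite add1n ltnS in k2.
Qed.
Lemma eps_termsI f k : (0<k)%N -> (k <= deg f)%N -> f^`N(k) != 0 -> (gval nu f - gval nu f^`N(k), k) \in eps_terms nu f.
Proof.
move=> k0 kd nz; rewrite /eps_terms; apply/mapP; exists k => //.
by rewrite mem_filter mem_iota nz k0 add1n ltnS kd.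
Qed.
Lemma eps_terms_pos f t : t \in eps_terms nu f -> (0 < t.2)%N.
Proof. by case/eps_termsP => k [k0 _ _ ->]. Qed.
Lemma eps_pos f : (0 < (eps le nu f).2)%N.
Proof.
rewrite /eps; case E: (eps_terms nu f) => [|t ts] //.
apply: (@eps_terms_pos f); rewrite E; exact: foldr_qmax_mem.
Qed.
Lemma eps_ge f t : t \in eps_terms nu f -> qle le t (eps le nu f).
Proof.
rewrite /eps; case E: (eps_terms nu f) => [|t0 ts] // ht.
apply: foldr_qmax_ge => // u hu; apply: (@eps_terms_pos f); by rewrite E.
Qed.
Lemma nderivn_deg_neq0 f : f != 0 -> f^`N(deg f) != 0.
Proof.
move=> fn0; apply/eqP => h.
have := congr1 (fun p : {poly K} => p`_0) h; rewrite coef_nderivn addn0 binn mulr1n coef0 => e.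
move: fn0; rewrite -lead_coef_eq0 lead_coefE /deg e eqxx //.
Qed.
Lemma eps_in f : nonconstant f -> eps le nu f \in eps_terms nu f.
Proof.
move=> nc.
have fn0 : f != 0 by apply: contraTneq nc => ->; rewrite /nonconstant size_poly0.
have : (gval nu f - gval nu f^`N(deg f), deg f) \in eps_terms nu f.
  apply: eps_termsI => //; last exact: nderivn_deg_neq0.
  by rewrite /deg -subn1 subn_gt0.
rewrite /eps; case: (eps_terms nu f) => [|t0 ts] //= _.
exact: foldr_qmax_mem.
Qed.
End Eps2.
Section Leib.
Variable K : fieldType.
Lemma nderivn0p (n : nat) : (0 : {poly K})^`N(n) = 0.
Proof. by apply: nderivn_poly0; rewrite size_poly0. Qed.
Lemma nderivnMX (r : {poly K}) n : (r * 'X)^`N(n.+1) = r^`N(n) + r^`N(n.+1) * 'X.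
Proof. by have := nderivnMXaddC n r 0; rewrite addr0. Qed.
Lemma nderivnM (p q : {poly K}) k : (p * q)^`N(k) = \sum_(i < k.+1) p^`N(i) * q^`N(k - i).
Proof.
elim/poly_ind: p k => [|p c IH] k.
  by rewrite mul0r nderivn0p big1 // => i _; rewrite nderivn0p mul0r.
case: k => [|k].
  by rewrite big_ord1 !nderivn0.
have -> : (p * 'X + c%:P) * q = (p * q) * 'X + c *: q.
  by rewrite mulrDl -mul_polyC; congr (_ + _); rewrite -!mulrA [q * _]mulrC.
have L1 : \sum_(i < k.+2) p^`N(i) * q^`N(k.+1 - i) = p * q^`N(k.+1) + \sum_(i<k.+1) p^`N(i.+1) * q^`N(k - i).
  by rewrite big_ord_recl nderivn0 subn0; congr (_ + _); apply: eq_bigr => i _; rewrite /bump /= add1n subSS.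
have R1 : \sum_(i < k.+2) (p*'X + c%:P)^`N(i) * q^`N(k.+1 - i) = (p*'X + c%:P) * q^`N(k.+1) + (\sum_(i<k.+1) p^`N(i) * q^`N(k-i)) + (\sum_(i<k.+1) p^`N(i.+1) * q^`N(k - i)) * 'X.
  rewrite big_ord_recl nderivn0 subn0 -addrA; congr (_ + _).
  rewrite mulr_suml -big_split /=; apply: eq_bigr => i _; rewrite /bump /= add1n subSS nderivnMXaddC; ring.
rewrite nderivnD nderivnZ nderivnMX !IH L1 R1 -mul_polyC.
ring.
Qed.
End Leib.
Section Core.
Variable G : zmodType.
Variable le : rel G.
Hypothesis Hle : ordered_abelian_group le.
Variable K : fieldType.
Variable nu : {poly K} -> option G.
Hypothesis Hnu : valuation le nu.
Implicit Types f g h : {poly K}.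
Variable Q : {poly K}.
Hypothesis HQ : key_polynomial le nu Q.

Let B := (eps le nu Q).1.
Let d := (eps le nu Q).2.
Definition FF k y := oadd (osc d y) (Some (B *+ k)).

Lemma d_pos : (0 < d)%N. Proof. exact: eps_pos. Qed.
Lemma Q_nc : nonconstant Q. Proof. by case: HQ. Qed.
Lemma Q_neq0 : Q != 0. Proof. by case: HQ => /monic_neq0. Qed.

Lemma FF_mul i j x y : nu x <> None -> nu y <> None ->
  FF (i + j) (nu (x * y)) = oadd (FF i (nu x)) (FF j (nu y)).
Proof.
rewrite /FF (nuM Hnu); case: (nu x) => // a _; case: (nu y) => // b _ /=.
by rewrite mulrnDl mulrnDr addrACA.
Qed.
Lemma FF0 y : FF 0 y = osc d y. Proof. by rewrite /FF mulr0n oaddx0. Qed.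
Lemma FF_le k x y : ole le x y -> ole le (FF k x) (FF k y).
Proof. by move=> h; rewrite /FF; apply: (oadd_le Hle); [apply: (osc_le Hle)|apply: (oleR Hle)]. Qed.
Lemma FF_lt k x y : olt le (FF k x) (FF k y) -> olt le x y.
Proof. apply: contra => h; exact: FF_le. Qed.
Lemma upc_FF (P : option G -> Prop) k : upc le P -> upc le (fun y => P (FF k y)).
Proof. by move=> uP x y h; apply: uP; apply: FF_le. Qed.

Lemma qle_ole f k : f != 0 -> f^`N(k) != 0 -> qle le (gval nu f - gval nu f^`N(k), k) (B, d) ->
  ole le (osc d (nu f)) (FF k (nu f^`N(k))).
Proof.
move=> h1 h2; rewrite /qle /FF (nuNZ Hnu h1) (nuNZ Hnu h2) /= => h.
by rewrite -(leD2r Hle _ _ (gval nu f^`N(k) *+ d)) -mulrnDl subrK addrC in h.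
Qed.
Lemma nqle_olt f k : f != 0 -> f^`N(k) != 0 -> ~~ qle le (B, d) (gval nu f - gval nu f^`N(k), k) ->
  olt le (osc d (nu f)) (FF k (nu f^`N(k))).
Proof.
move=> h1 h2; rewrite /qle /FF /olt (nuNZ Hnu h1) (nuNZ Hnu h2) /= => h.
have h' : lt le ((gval nu f - gval nu f^`N(k)) *+ d) (B *+ k) by [].
rewrite -(ltD2r Hle _ _ (gval nu f^`N(k) *+ d)) -mulrnDl subrK addrC in h'.
exact: h'.
Qed.

Lemma size_deg f : f != 0 -> size f = (deg f).+1.
Proof. by move=> h; rewrite /deg prednK // size_poly_gt0. Qed.
Lemma nderivn_big f k : (deg f < k)%N -> f^`N(k) = 0.
Proof.
move=> h; apply: nderivn_poly0; case: (eqVneq f 0) => [->|fn0]; first by rewrite size_poly0.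
by rewrite size_deg.
Qed.

Lemma epsQ : eps le nu Q = (B, d). Proof. by rewrite /B /d -surjective_pairing. Qed.

Lemma WQ k : ole le (osc d (nu Q)) (FF k (nu Q^`N(k))).
Proof.
case: k => [|k]; first by rewrite FF0 nderivn0 (oleR Hle).
case: (eqVneq Q^`N(k.+1) 0) => [->|nz]; first by rewrite (nu0 Hnu) ole_None.
apply: qle_ole => //; first exact: Q_neq0.
rewrite -epsQ; apply: (eps_ge Hle); apply: eps_termsI => //.
by rewrite leqNgt; apply: contra nz => /nderivn_big ->.
Qed.

Lemma Qexact : osc d (nu Q) = FF d (nu Q^`N(d)).
Proof.
have := eps_in le nu Q_nc; rewrite epsQ => /eps_termsP [k [_ _ nz [eB ed]]].
rewrite -ed in nz *; rewrite /FF (nuNZ Hnu Q_neq0) (nuNZ Hnu nz) /= eB.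
by rewrite -ed -mulrnDl addrC subrK.
Qed.

Definition Sp h := forall k, (0 < k)%N -> olt le (osc d (nu h)) (FF k (nu h^`N(k))).
Definition Wp h := forall k, ole le (osc d (nu h)) (FF k (nu h^`N(k))).

Lemma Sp_W h : Sp h -> Wp h.
Proof. move=> S [|k]; first by rewrite FF0 nderivn0 (oleR Hle). apply: (oltW Hle); exact: S. Qed.

Lemma Sp_small h : h != 0 -> (size h < size Q)%N -> Sp h.
Proof.
move=> hn0 hs k k0.
case: (eqVneq h^`N(k) 0) => [->|nz]; first by rewrite (nu0 Hnu) (nuNZ Hnu hn0).
have kd : (k <= deg h)%N by rewrite leqNgt; apply: contra nz => /nderivn_big ->.
apply: nqle_olt => //; apply/negP => hq.
have nch : nonconstant h by rewrite /nonconstant size_deg // ltnS; apply: leq_trans kd.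
have t_in := eps_termsI nu k0 kd nz.
case: HQ => _ _ /(_ h nch) Hk.
have : (deg Q <= deg h)%N.
  apply: Hk; rewrite epsQ; apply: (qleT Hle _ hq); first by [].
  exact: (eps_ge Hle).
rewrite /deg; move: hs; rewrite !size_deg //; last exact: Q_neq0.
by rewrite /deg ltnS leqNgt => /negP.
Qed.

Lemma oadd_lt_r (a c : G) (b e : option G) : ole le (Some a) b -> olt le (Some c) e -> olt le (Some (a + c)) (oadd b e).
Proof. by move=> h1 h2; rewrite addrC oaddC; apply: (oadd_lt Hle). Qed.
Lemma osc_oadd (x y : option G) : osc d (oadd x y) = oadd (osc d x) (osc d y).
Proof. by case: x; case: y => //= a b; rewrite mulrnDl. Qed.
Lemma nuNN f : f != 0 -> nu f <> None.
Proof. by move/(nuNZ Hnu) => ->. Qed.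

Lemma S_mul (u v : {poly K}) : u != 0 -> v != 0 -> Sp u -> Sp v -> Sp (u * v).
Proof.
move=> un vn Su Sv k k0.
have Wu := Sp_W Su; have Wv := Sp_W Sv.
have uvn : u * v != 0 by rewrite mulf_neq0.
rewrite nderivnM.
apply: (nu_sum_upc Hnu (P := fun y => olt le (osc d (nu (u*v))) (FF k y))).
- apply: (upc_FF (P := olt le (osc d (nu (u*v))))); exact: (upc_olt Hle).
- by rewrite (nuNZ Hnu uvn).
move=> i _.
case: (eqVneq u^`N(i) 0) => [->|n1]; first by rewrite mul0r (nu0 Hnu) (nuNZ Hnu uvn).
case: (eqVneq v^`N(k - i) 0) => [->|n2]; first by rewrite mulr0 (nu0 Hnu) (nuNZ Hnu uvn).
have ik : (i <= k)%N by rewrite -ltnS ltn_ord.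
have -> : FF k (nu (u^`N(i) * v^`N(k - i))) = FF (i + (k - i)) (nu (u^`N(i) * v^`N(k - i))).
  by rewrite subnKC.
rewrite FF_mul; try exact: nuNN.
rewrite (nuM Hnu) (nuNZ Hnu un) (nuNZ Hnu vn) /= mulrnDl.
have h1 := Wu i; have h2 := Wv (k - i)%N.
rewrite (nuNZ Hnu un) in h1; rewrite (nuNZ Hnu vn) in h2.
case: (posnP i) => [i0|ip].
- apply: oadd_lt_r => //.
  have := Sv (k - i)%N; rewrite (nuNZ Hnu vn); apply; by rewrite i0 subn0.
- apply: (oadd_lt Hle) => //.
  have := Su i; rewrite (nuNZ Hnu un); exact.
Qed.

Lemma Qd_neq0 : Q^`N(d) != 0.
Proof.
apply/negP => /eqP h; have := Qexact; rewrite h (nu0 Hnu) (nuNZ Hnu Q_neq0) /FF //.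
Qed.

Lemma qQexact (q : {poly K}) : q != 0 -> Sp q -> FF d (nu ((q * Q)^`N(d))) = osc d (nu (q * Q)).
Proof.
move=> qn Sq; have Wq := Sp_W Sq.
have qQn : q * Q != 0 by rewrite mulf_neq0 // Q_neq0.
rewrite nderivnM big_ord_recl /= nderivn0 subn0.
set x := q * Q^`N(d).
set y := \sum_(i < d) _.
have ex : FF d (nu x) = osc d (nu (q * Q)).
  have -> : FF d (nu x) = FF (0 + d) (nu x) by [].
  rewrite FF_mul; [|exact: (nuNN qn)|exact: (nuNN Qd_neq0)].
  by rewrite FF0 -Qexact (nuM Hnu) osc_oadd.
have hy : olt le (osc d (nu (q * Q))) (FF d (nu y)).
  apply: (nu_sum_upc Hnu (P := fun z => olt le (osc d (nu (q * Q))) (FF d z))).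
  - apply: (upc_FF (P := olt le (osc d (nu (q * Q))))); exact: (upc_olt Hle).
  - by rewrite (nuNZ Hnu qQn).
  move=> i _; rewrite /bump /= add1n.
  case: (eqVneq q^`N(i.+1) 0) => [->|n1]; first by rewrite mul0r (nu0 Hnu) (nuNZ Hnu qQn).
  case: (eqVneq Q^`N(d - i.+1) 0) => [->|n2]; first by rewrite mulr0 (nu0 Hnu) (nuNZ Hnu qQn).
  have ik : (i.+1 <= d)%N by rewrite ltn_ord.
  have -> : FF d (nu (q^`N(i.+1) * Q^`N(d - i.+1))) = FF (i.+1 + (d - i.+1)) (nu (q^`N(i.+1) * Q^`N(d - i.+1))).
    by rewrite subnKC.
  rewrite FF_mul; try exact: nuNN.
  rewrite (nuM Hnu) (nuNZ Hnu qn) (nuNZ Hnu Q_neq0) /= mulrnDl.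
  have h2 := WQ (d - i.+1); rewrite (nuNZ Hnu Q_neq0) in h2.
  apply: (oadd_lt Hle) => //.
  have := Sq i.+1%N; rewrite (nuNZ Hnu qn); exact.
rewrite (nu_strict Hle Hnu) ?ex //.
apply: (FF_lt (k := d)); by rewrite ex.
Qed.

Lemma core (u v : {poly K}) : (size u < size Q)%N -> (size v < size Q)%N ->
  ole le (nu (u * v)) (nu (u * v %% Q)) /\ ole le (nu (u * v)) (nu (u * v %/ Q * Q)).
Proof.
move=> su sv.
case: (eqVneq u 0) => [->|un]; first by rewrite mul0r mod0p div0p mul0r (oleR Hle).
case: (eqVneq v 0) => [->|vn]; first by rewrite mulr0 mod0p div0p mul0r (oleR Hle).
have uvn : u * v != 0 by rewrite mulf_neq0.
have E := divp_eq (u * v) Q.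
set q := u * v %/ Q in E *; set r := u * v %% Q in E *.
case: (eqVneq q 0) => [q0|qn].
  by rewrite q0 mul0r (nu0 Hnu) ole_None; move: E; rewrite q0 mul0r add0r => <-; rewrite (oleR Hle).
case: (eqVneq r 0) => [r0|rn].
  by rewrite r0 (nu0 Hnu) ole_None; move: E; rewrite r0 addr0 => <-; rewrite (oleR Hle).
have Qn := Q_neq0.
have Su := Sp_small un su; have Sv := Sp_small vn sv.
have Suv := S_mul un vn Su Sv.
have Sr : Sp r by apply: Sp_small => //; rewrite ltn_modp.
have Sq : Sp q.
  apply: Sp_small => //; rewrite /q size_divp //.
  move: (size_mul_leq u v) su sv; rewrite -!subn1.
  move: (size (u * v)) (size u) (size v) (size Q) => a b c e; lia.
have ex := qQexact qn Sq.
have Eq : q * Q = u * v - r by rewrite E addrK.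
rewrite Eq nderivnB in ex.
have hd := d_pos.
have : olt le (osc d (nu (u * v))) (FF d (nu ((u * v)^`N(d) - r^`N(d))))
    \/ olt le (osc d (nu r)) (FF d (nu ((u * v)^`N(d) - r^`N(d)))).
  apply: (nuB_upc Hle Hnu (P := fun z => olt le (osc d (nu (u * v))) (FF d z) \/ olt le (osc d (nu r)) (FF d z))).
  - move=> x y hxy [h|h]; [left|right]; exact: (olt_le_trans Hle h (FF_le _ hxy)).
  - by left; apply: Suv.
  - by right; apply: Sr.
rewrite ex -Eq => [[h|h]].
- rewrite osc_lt2 // in h.
  split; last exact: (oltW Hle).
  have -> : r = u * v - q * Q by rewrite E addrC addKr.
  apply: (nuB_upc Hle Hnu (P := ole le (nu (u * v)))); [move=> x y h1 h2; exact: (oleT Hle h2 h1)| exact: (oleR Hle)| exact: (oltW Hle)].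
- rewrite osc_lt2 // in h.
  have e2 : nu (u * v) = nu r by rewrite E addrC (nu_strict Hle Hnu).
  rewrite e2; split; [exact: (oleR Hle) | exact: (oltW Hle)].
Qed.

Lemma monic_sub_size (p r : {poly K}) : p \is monic -> r \is monic -> size p = size r -> (size (p - r)%R < size p)%N.
Proof.
move=> mp mr sz.
have pn := monic_neq0 mp.
have le1 : (size (p - r)%R <= size p)%N.
  by apply: (leq_trans (size_polyD _ _)); rewrite size_polyN sz maxnn.
rewrite ltn_neqAle le1 andbT; apply/eqP => e.
move/monicP: mp => lp; move/monicP: mr => lr.
have : lead_coef (p - r) = 0.
  by rewrite lead_coefE e coefB [in X in _ - r`_X]sz -!lead_coefE lp lr subrr.
move/eqP; rewrite lead_coef_eq0 => /eqP h0; move: e; rewrite h0 size_poly0 => e.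
by move: pn; rewrite -size_poly_eq0 -e eqxx.
Qed.

Lemma same_deg (Q' : {poly K}) : Q' \is monic -> size Q' = size Q -> Wp Q' ->
  ole le (nu Q') (nu (Q' - Q)) /\ ole le (nu Q') (nu Q).
Proof.
move=> mQ' sz W'.
set h := Q' - Q.
case: (eqVneq h 0) => [h0|hn].
  have eQ : Q' = Q by apply/eqP; rewrite -subr_eq0 -/h h0.
  by rewrite h0 (nu0 Hnu) ole_None eQ (oleR Hle).
have mQ : Q \is monic by case: HQ.
have sh : (size h < size Q)%N by rewrite -sz; apply: monic_sub_size.
have Sh := Sp_small hn sh.
have eQ : Q = Q' - h by rewrite /h opprB addrC subrK.
have hd := d_pos.
have : ole le (osc d (nu Q')) (FF d (nu (Q'^`N(d) - h^`N(d))))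
     \/ olt le (osc d (nu h)) (FF d (nu (Q'^`N(d) - h^`N(d)))).
  apply: (nuB_upc Hle Hnu (P := fun z => ole le (osc d (nu Q')) (FF d z) \/ olt le (osc d (nu h)) (FF d z))).
  - move=> x y hxy [H|H]; [left; exact: (oleT Hle H (FF_le _ hxy)) | right; exact: (olt_le_trans Hle H (FF_le _ hxy))].
  - by left; apply: W'.
  - by right; apply: Sh.
have strict : olt le (nu h) (nu Q) -> ole le (nu Q') (nu h) /\ ole le (nu Q') (nu Q).
  move=> H; have eQ' : Q' = h + Q by rewrite /h subrK.
  rewrite eQ' (nu_strict Hle Hnu H); split; [exact: (oleR Hle)| exact: (oltW Hle)].
rewrite -nderivnB -eQ -Qexact => [[H|H]].
- rewrite osc_le2 // in H.
  case/orP: (oleTot Hle (nu Q) (nu h)) => H2.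
  + by split => //; exact: (oleT Hle H H2).
  + case: (eqVneq (nu h) (nu Q)) => [e|ne].
      by rewrite e; split.
    apply: strict; rewrite /olt; apply/negP => H3; by move: ne; rewrite (oleA Hle H2 H3) eqxx.
- rewrite osc_lt2 // in H; exact: strict.
Qed.

Definition goodAt (gm : option G) (g : {poly K}) := exists (N : nat) (c : nat -> {poly K}),
  [/\ forall n, (size (c n) < size Q)%N, forall n, (N <= n)%N -> c n = 0,
      g = \sum_(n < N) c n * Q ^+ n & forall n, ole le gm (nu (c n * Q ^+ n))].

Lemma sQ_pos : (0 < size Q)%N. Proof. by rewrite size_poly_gt0 Q_neq0. Qed.

Lemma sum_widen (N1 N : nat) (c : nat -> {poly K}) : (N1 <= N)%N -> (forall n, (N1 <= n)%N -> c n = 0) ->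
  \sum_(n < N) c n * Q ^+ n = \sum_(n < N1) c n * Q ^+ n.
Proof.
move=> hN hc; rewrite (big_ord_widen N (fun n => c n * Q ^+ n) hN) [RHS]big_mkcond /=.
apply: eq_bigr => i _; case: ifP => // /negbT; rewrite -leqNgt => h; by rewrite hc // mul0r.
Qed.

Lemma good_mono (gm gm' : option G) (g : {poly K}) : ole le gm' gm -> goodAt gm g -> goodAt gm' g.
Proof.
move=> h [N [c [h1 h2 h3 h4]]]; exists N, c; split => // n; exact: (oleT Hle h (h4 n)).
Qed.

Lemma good0 gm : goodAt gm 0.
Proof.
exists 0%N, (fun _ => 0); split => //.
- move=> n; rewrite size_poly0; exact: sQ_pos.
- by rewrite big_ord0.
- by move=> n; rewrite mul0r (nu0 Hnu) ole_None.
Qed.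

Lemma goodD (gm : option G) (g1 g2 : {poly K}) : goodAt gm g1 -> goodAt gm g2 -> goodAt gm (g1 + g2).
Proof.
move=> [N1 [c1 [a1 b1 e1 d1]]] [N2 [c2 [a2 b2 e2 d2]]].
exists (maxn N1 N2), (fun n => c1 n + c2 n); split.
- move=> n; apply: leq_ltn_trans (size_polyD _ _) _; by rewrite gtn_max a1 a2.
- by move=> n; rewrite geq_max => /andP [h1 h2]; rewrite b1 // b2 // addr0.
- rewrite e1 e2 -(sum_widen (N := maxn N1 N2) (leq_maxl N1 N2) b1).
  rewrite -(sum_widen (N := maxn N1 N2) (leq_maxr N1 N2) b2) -big_split /=.
  by apply: eq_bigr => i _; rewrite mulrDl.
- move=> n; rewrite mulrDl; apply: (nuD_upc Hnu (P := ole le gm)) => //.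
  by move=> x y h1 h2; exact: (oleT Hle h2 h1).
Qed.

Lemma good_sum gm (I : Type) (s : seq I) (P : pred I) (F : I -> {poly K}) :
  (forall i, P i -> goodAt gm (F i)) -> goodAt gm (\sum_(i <- s | P i) F i).
Proof.
move=> h; apply: (big_ind (goodAt gm)); [exact: good0| exact: goodD| exact: h].
Qed.

Lemma good_single gm (r : {poly K}) (n : nat) : (size r < size Q)%N -> ole le gm (nu (r * Q ^+ n)) -> goodAt gm (r * Q ^+ n).
Proof.
move=> sr h; exists n.+1, (fun m => if m == n then r else 0); split.
- move=> m; case: ifP => // _; rewrite size_poly0; exact: sQ_pos.
- by move=> m hm; case: eqP => // e; move: hm; rewrite e ltnn.
- rewrite big_ord_recr /= eqxx big1 ?add0r // => i _.
  by rewrite ifN ?mul0r // neq_ltn ltn_ord.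
- by move=> m; case: ifP => [/eqP ->|_] //; rewrite mul0r (nu0 Hnu) ole_None.
Qed.

Lemma size_quot (u v : {poly K}) : (size u < size Q)%N -> (size v < size Q)%N -> (size (u * v %/ Q)%R < size Q)%N.
Proof.
move=> su sv; rewrite size_divp; last exact: Q_neq0.
move: (size_mul_leq u v) su sv; rewrite -!subn1.
move: (size (u * v)) (size u) (size v) (size Q) => a b c e; lia.
Qed.

Lemma good_prod2 (u v : {poly K}) n : (size u < size Q)%N -> (size v < size Q)%N ->
  goodAt (nu (u * v * Q ^+ n)) (u * v * Q ^+ n).
Proof.
move=> su sv; have [c1 c2] := core su sv.
have E := divp_eq (u * v) Q.
have e : u * v * Q ^+ n = (u * v %% Q) * Q ^+ n + (u * v %/ Q) * Q ^+ n.+1.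
  by rewrite {1}E mulrDl addrC exprS mulrA.
rewrite [X in goodAt _ X]e.
apply: goodD; apply: good_single.
- by rewrite ltn_modp Q_neq0.
- by rewrite [nu (u * v * _)](nuM Hnu) [nu (_ %% Q * _)](nuM Hnu); apply: (oadd_le Hle) => //; exact: (oleR Hle).
- exact: size_quot.
- rewrite exprS mulrA [nu (u * v * _)](nuM Hnu) [nu (_ * Q * _)](nuM Hnu).
  by apply: (oadd_le Hle) => //; exact: (oleR Hle).
Qed.

Lemma good_mul (g1 g2 : option G) (x y : {poly K}) : goodAt g1 x -> goodAt g2 y -> goodAt (oadd g1 g2) (x * y).
Proof.
move=> [N1 [c1 [a1 b1 e1 d1]]] [N2 [c2 [a2 b2 e2 d2]]].
rewrite e1 e2 big_distrlr /=; apply: good_sum => i _; apply: good_sum => j _.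
have -> : c1 i * Q ^+ i * (c2 j * Q ^+ j) = c1 i * c2 j * Q ^+ (i + j).
  by rewrite exprD; rewrite -!mulrA; congr (_ * _); rewrite mulrCA.
apply: (good_mono (gm := nu (c1 i * c2 j * Q ^+ (i + j)))); last exact: good_prod2.
have -> : c1 i * c2 j * Q ^+ (i + j) = c1 i * Q ^+ i * (c2 j * Q ^+ j).
  by rewrite exprD; rewrite -!mulrA; congr (_ * _); rewrite mulrCA.
by rewrite (nuM Hnu); apply: (oadd_le Hle).
Qed.

Lemma divp_divp (p a b : {poly K}) : a != 0 -> b != 0 -> p %/ (a * b) = p %/ a %/ b.
Proof.
move=> an bn.
set q1 := p %/ a; set q2 := q1 %/ b.
have E1 := divp_eq p a; have E2 := divp_eq q1 b.
have E : p = q2 * (a * b) + ((q1 %% b) * a + p %% a).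
  by rewrite {1}E1 -/q1 {1}E2 -/q2 mulrDl addrA -mulrA [b * a]mulrC.
rewrite {1}E divp_addl_mul_small //.
apply: leq_ltn_trans (size_polyD _ _) _; rewrite gtn_max; apply/andP; split.
- apply: leq_ltn_trans (size_mul_leq _ _) _.
  rewrite size_mul //.
  have := ltn_modp q1 b; rewrite bn => h.
  have := size_poly_gt0 a; rewrite an.
  move: (size (q1 %% b)) (size b) (size a) h => x y z; lia.
- rewrite size_mul //.
  have := ltn_modp p a; rewrite an => h.
  have := size_poly_gt0 b; rewrite bn.
  move: (size (p %% a)) (size b) (size a) h => x y z; lia.
Qed.

Lemma shift_sum (N : nat) (c : nat -> {poly K}) : (forall n, (N <= n)%N -> c n = 0) ->
  \sum_(m < N) c m * Q ^+ m = (\sum_(m < N.-1) c m.+1 * Q ^+ m) * Q + c 0%N.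
Proof.
case: N => [|N] hc; first by rewrite !big_ord0 mul0r add0r hc.
rewrite big_ord_recl /= expr0 mulr1 addrC mulr_suml; congr (_ + _).
by apply: eq_bigr => i _; rewrite /bump /= add1n exprSr mulrA.
Qed.

Lemma qexp_shift g n : qexp_coef Q g n.+1 = qexp_coef Q (g %/ Q) n.
Proof.
rewrite /qexp_coef exprS divp_divp //; first exact: Q_neq0.
by rewrite expf_neq0 // Q_neq0.
Qed.

Lemma qexp_size g i : (size (qexp_coef Q g i) < size Q)%N.
Proof. by rewrite /qexp_coef ltn_modp Q_neq0. Qed.

Lemma qexp_unique n : forall (N : nat) (c : nat -> {poly K}) g,
  (forall m, (size (c m) < size Q)%N) -> (forall m, (N <= m)%N -> c m = 0) ->
  g = \sum_(m < N) c m * Q ^+ m -> qexp_coef Q g n = c n.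
Proof.
elim: n => [|n IH] N c g hs hz ->.
  by rewrite /qexp_coef expr0 divp1 shift_sum // modp_addl_mul_small.
rewrite qexp_shift shift_sum // divp_addl_mul_small //.
apply: (IH N.-1 (fun m => c m.+1)).
- by move=> m; apply: hs.
- move=> m hm; apply: hz; by case: N hm {hs} => //= N.
- by [].
Qed.

Lemma big_omin_le (n : nat) (F : 'I_n -> option G) (j : 'I_n) :
  ole le (\big[omin le/None]_(i < n) F i) (F j).
Proof.
elim: n F j => [|n IH] F j; first by case: j.
rewrite big_ord_recl; case: (unliftP ord0 j) => [j'|] ->.
- apply: (oleT Hle _ (IH (fun i => F (lift ord0 i)) j')); exact: (omin_le Hle _ _).2.
- exact: (omin_le Hle _ _).1.
Qed.

Lemma good_nuQ gm g : goodAt gm g -> ole le gm (nuQ le nu Q g).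
Proof.
move=> [N [c [hs hz e hn]]]; rewrite /nuQ.
have K1 : forall x y, ole le gm x -> ole le gm y -> ole le gm (omin le x y) by move=> x y; exact: (@omin_P _ le (fun z => ole le gm z)).
apply: (big_ind (fun x => ole le gm x) (ole_None _ _) K1).
move=> i _; rewrite (qexp_unique i hs hz e); exact: hn.
Qed.

Lemma qexp_sum (N : nat) g : (size g <= N)%N -> g = \sum_(i < N) qexp_coef Q g i * Q ^+ i.
Proof.
have s2 : (1 < size Q)%N by case: HQ.
elim: N g => [|N IH] g hg.
  by rewrite big_ord0; apply/eqP; rewrite -size_poly_eq0 -leqn0.
rewrite big_ord_recl /= expr0 mulr1.
have hq : (size (g %/ Q)%R <= N)%N.
  rewrite size_divp; last exact: Q_neq0.
  move: hg s2; move: (size g) (size Q) => a b; lia.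
rewrite {1}(divp_eq g Q) (IH _ hq) addrC /qexp_coef expr0 divp1; congr (_ + _).
rewrite mulr_suml; apply: eq_bigr => i _; rewrite /bump /= add1n -/(qexp_coef Q g i.+1) qexp_shift.
by rewrite exprSr mulrA.
Qed.

Lemma nuQ_le g : ole le (nuQ le nu Q g) (nu g).
Proof.
rewrite {2}(@qexp_sum (size g) g (leqnn _)).
apply: (nu_sum_upc Hnu (P := ole le (nuQ le nu Q g))).
- by move=> x y h1 h2; exact: (oleT Hle h2 h1).
- exact: ole_None.
- move=> i _; exact: big_omin_le.
Qed.

Lemma good_const (a : K) : goodAt (nu a%:P) a%:P.
Proof.
have -> : a%:P = a%:P * Q ^+ 0 by rewrite expr0 mulr1.
apply: good_single; last by rewrite expr0 mulr1 (oleR Hle).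
apply: leq_ltn_trans (size_polyC_leq1 a) _; by case: HQ.
Qed.

Lemma good_prod (s : seq {poly K}) : (forall q, q \in s -> goodAt (nu q) q) ->
  goodAt (nu (\prod_(q <- s) q)) (\prod_(q <- s) q).
Proof.
elim: s => [|q s IH] h; first by rewrite big_nil -polyC1; exact: good_const.
rewrite big_cons (nuM Hnu); apply: good_mul; first by apply: h; rewrite mem_head.
by apply: IH => p hp; apply: h; rewrite inE hp orbT.
Qed.

Lemma Wp_of (q : {poly K}) : q != 0 -> qle le (eps le nu q) (eps le nu Q) -> Wp q.
Proof.
move=> qn hq [|k]; first by rewrite FF0 nderivn0 (oleR Hle).
case: (eqVneq q^`N(k.+1) 0) => [->|nz]; first by rewrite (nu0 Hnu) ole_None.
apply: qle_ole => //; rewrite -epsQ.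
have kd : (k.+1 <= deg q)%N by rewrite leqNgt; apply: contra nz => /nderivn_big ->.
apply: (qleT Hle (eps_pos le nu q)) hq.
by apply: (eps_ge Hle); apply: eps_termsI.
Qed.

Lemma good_key (q : {poly K}) : key_polynomial le nu q -> qle le (eps le nu q) (eps le nu Q) ->
  goodAt (nu q) q.
Proof.
move=> [mq ncq kq] hq.
have qn := monic_neq0 mq.
have hd : (deg q <= deg Q)%N by apply: kq => //; exact: Q_nc.
have mQ : Q \is monic by case: HQ.
have sQ2 : (1 < size Q)%N by case: HQ.
case: (ltnP (size q) (size Q)) => hs.
  have -> : q = q * Q ^+ 0 by rewrite expr0 mulr1.
  by apply: good_single => //; rewrite expr0 mulr1 (oleR Hle).
have es : size q = size Q.
  apply/eqP; rewrite eqn_leq hs andbT.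
  move: hd; rewrite /deg; move: (size q) (size Q) sQ2 => a b; lia.
have [h1 h2] := same_deg mq es (Wp_of qn hq).
have eq : q = (q - Q) * Q ^+ 0 + 1 * Q ^+ 1 by rewrite expr0 expr1 mulr1 mul1r subrK.
rewrite [X in goodAt _ X]eq.
apply: goodD; apply: good_single.
- by rewrite -es; exact: (monic_sub_size mq mQ es).
- by rewrite expr0 mulr1.
- by rewrite size_poly1.
- by rewrite expr1 mul1r.
Qed.
End Core.
Section Main.
Variable G : zmodType.
Variable le : rel G.
Hypothesis Hle : ordered_abelian_group le.
Variable K : fieldType.
Variable nu : {poly K} -> option G.
Hypothesis Hnu : valuation le nu.
Variable QS : {poly K} -> Prop.
Hypothesis Hkey : forall Q, QS Q -> key_polynomial le nu Q.

Definition GSbody (f : {poly K}) :=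
  exists ts : seq (K * seq {poly K}),
      [/\ f = \sum_(t <- ts) t.1%:P * \prod_(q <- t.2) q,
          forall t, t \in ts -> ole le (nu f) (nu (t.1%:P * \prod_(q <- t.2) q)) &
          forall t q, t \in ts -> q \in t.2 -> QS q /\ (deg q <= deg f)%N].

Lemma const_case (f : {poly K}) : (size f <= 1)%N -> GSbody f.
Proof.
move=> hf; exists [:: (f`_0, [::])]; split.
- by rewrite big_seq1 /= big_nil mulr1 -size1_polyC.
- by move=> t; rewrite inE => /eqP -> /=; rewrite big_nil mulr1 -size1_polyC // (oleR Hle).
- by move=> t q; rewrite inE => /eqP ->.
Qed.

Lemma prod_nseq M (Q : {poly K}) : \prod_(q <- nseq M Q) q = Q ^+ M.
Proof. elim: M => [|M IH]; [by rewrite big_nil expr0 | by rewrite /= big_cons IH exprS]. Qed.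

Lemma dir1 : complete_set le nu QS -> GS1star le nu QS.
Proof.
move=> Hc f.
suff H : forall n (f : {poly K}), (size f <= n)%N -> GSbody f by apply: (H _ f (leqnn _)).
elim=> [|n IH] {}f hf.
  by apply: const_case; apply: leq_trans hf _.
case: (leqP (size f) 1) => hc; first exact: const_case.
have [Q [QSQ dQ eQ]] := Hc f hc.
have HQ := Hkey QSQ.
have Qn : Q != 0 by case: HQ => /monic_neq0.
have fn : f != 0 by rewrite -size_poly_gt0; apply: ltn_trans hc.
have sQf : (size Q <= size f)%N by rewrite (size_deg Qn) (size_deg fn).
have claim : forall M, (M <= size f)%N -> exists ts : seq (K * seq {poly K}),
    [/\ \sum_(t <- ts) t.1%:P * \prod_(q <- t.2) q = \sum_(i < M) qexp_coef Q f i * Q ^+ i,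
        forall t, t \in ts -> ole le (nu f) (nu (t.1%:P * \prod_(q <- t.2) q)) &
        forall t q, t \in ts -> q \in t.2 -> QS q /\ (deg q <= deg f)%N].
  elim=> [|M IHM] hM.
    by exists [::]; split; rewrite ?big_nil ?big_ord0.
  have [ts0 [e0 v0 q0]] := IHM (ltnW hM).
  have sfi0 := qexp_size HQ f M.
  have sfi : (size (qexp_coef Q f M) <= n)%N.
    by rewrite -ltnS; apply: leq_trans hf; apply: leq_trans sfi0 sQf.
  have [ts1 [e1 v1 q1]] := IH _ sfi.
  exists (ts0 ++ [seq (t.1, nseq M Q ++ t.2) | t <- ts1]); split.
  - rewrite big_cat big_map /= e0 big_ord_recr /=; congr (_ + _).
    rewrite e1 mulr_suml; apply: eq_bigr => t _; rewrite big_cat /= prod_nseq.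
    by rewrite [Q ^+ M * _]mulrC mulrA.
  - move=> t; rewrite mem_cat => /orP [ht|]; first exact: v0.
    case/mapP => t' ht' -> /=.
    rewrite big_cat /= prod_nseq [Q ^+ M * _]mulrC mulrA (nuM Hnu).
    apply: (oleT Hle _ (oadd_le Hle (v1 _ ht') (oleR Hle (nu (Q ^+ M))))).
    rewrite -(nuM Hnu) -eQ.
    exact: (big_omin_le Hle (fun i : 'I_(size f) => nu (qexp_coef Q f i * Q ^+ i)) (Ordinal hM)).
  - move=> t q; rewrite mem_cat => /orP [ht|]; first exact: q0.
    case/mapP => t' ht' -> /=; rewrite mem_cat => /orP [|hq].
      by rewrite mem_nseq => /andP [_ /eqP ->]; split.
    have [a b] := q1 _ _ ht' hq; split => //; apply: leq_trans b _.
    by rewrite /deg -!subn1 leq_sub2r // ltnW // (leq_trans sfi0 sQf).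
have [ts [e v q]] := claim _ (leqnn _).
exists ts; split => //; rewrite e; exact: (qexp_sum HQ (leqnn _)).
Qed.

Lemma list_max (L : seq {poly K}) : L != [::] ->
  exists2 Q, Q \in L & forall Q', Q' \in L -> qle le (eps le nu Q') (eps le nu Q).
Proof.
elim: L => [|a L IH] // _.
case: (eqVneq L [::]) => [->|Ln].
  exists a; first by rewrite mem_head.
  by move=> Q'; rewrite inE => /eqP ->; exact: (qleR Hle).
have [m hm hmax] := IH Ln.
case: (boolP (qle le (eps le nu a) (eps le nu m))) => h.
- exists m; first by rewrite inE hm orbT.
  by move=> Q'; rewrite inE => /orP [/eqP ->|]; [exact: h | exact: hmax].
- exists a; first by rewrite mem_head.
  move=> Q'; rewrite inE => /orP [/eqP ->|hQ']; first exact: (qleR Hle).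
  have h2 : qle le (eps le nu m) (eps le nu a).
    by case/orP: (qleTot Hle (eps le nu a) (eps le nu m)) => // h3; rewrite h3 in h.
  exact: (qleT Hle (eps_pos le nu m) (hmax _ hQ') h2).
Qed.

Lemma dir2 : GS1star le nu QS -> complete_set le nu QS.
Proof.
move=> Hg f nc; have [ts [e v q]] := Hg f.
set L := flatten [seq t.2 | t <- ts].
have memL : forall Q, Q \in L -> exists2 t, t \in ts & Q \in t.2.
  by move=> Q /flattenP [s /mapP [t ht ->] hQ]; exists t.
case: (eqVneq L [::]) => [L0|Ln].
  exfalso.
  have ef : f = (\sum_(t <- ts) t.1)%:P.
    rewrite e rmorph_sum; apply: eq_big_seq => t ht.
    case E: t.2 => [|a s]; first by rewrite big_nil mulr1.
    have : a \in L by apply/flattenP; exists t.2; [exact: map_f | rewrite E mem_head].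
    by rewrite L0 in_nil.
  by move: nc; rewrite /nonconstant ef ltnNge size_polyC_leq1.
have [Q hQL hmax] := list_max Ln.
have [t0 ht0 hQt0] := memL Q hQL.
have [QSQ dQ] := q t0 Q ht0 hQt0.
have HQ := Hkey QSQ.
exists Q; split => //.
apply: (oleA Hle); first exact: (nuQ_le Hle Hnu HQ f).
apply: (good_nuQ HQ).
rewrite [X in goodAt _ _ _ _ X]e big_seq.
apply: (good_sum Hle Hnu HQ) => t ht.
apply: (good_mono Hle (gm := nu (t.1%:P * \prod_(q <- t.2) q))); first exact: v.
rewrite (nuM Hnu); apply: (good_mul Hle Hnu HQ); first exact: (good_const Hle Hnu HQ).
apply: (good_prod Hle Hnu HQ) => p hp.
have [QSp _] := q t p ht hp.
apply: (good_key Hle Hnu HQ (Hkey QSp)); apply: hmax.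
by apply/flattenP; exists t.2 => //; exact: map_f.
Qed.
End Main.

Unset Implicit Arguments.

Theorem theorem1p2 (G : zmodType) (le : rel G) (K : fieldType)
  (nu : {poly K} -> option G) (QS : {poly K} -> Prop) :
  ordered_abelian_group le ->
  valuation le nu ->
  (forall Q, QS Q -> key_polynomial le nu Q) ->
  complete_set le nu QS <-> GS1star le nu QS.
Proof.
move=> Hle Hnu Hkey; split; [exact: (dir1 Hle Hnu Hkey) | exact: (dir2 Hle Hnu Hkey)].
Qed.
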